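(* Let $\mathcal{A}:\mathbb{R}^{n_1\times n_2}\to\mathbb{R}^m$ be linear, $R\ge1$, $\alpha,\beta>0$, and let $\hat X=\sum_{r=1}^R\hat u^r(\hat v^r)^T$ with $\hat u^r\in\mathbb{R}^{n_1}$, $\hat v^r\in\mathbb{R}^{n_2}$. Let $\eta\in\mathbb{R}^m$ and $y=\mathcal{A}(\hat X)+\eta$. If $(u^1_{\alpha,\beta},\dots,u^R_{\alpha,\beta},v^1_{\alpha,\beta},\dots,v^R_{\alpha,\beta})$ is a global minimizer of $J^R_{\alpha,\beta}$ and $X_{\alpha,\beta}=\sum_{r=1}^R u^r_{\alpha,\beta}(v^r_{\alpha,\beta})^T$, then $$\|y-\mathcal{A}(X_{\alpha,\beta})\|_2^2\le\|\eta\|_2^2+C_{2,1}\sqrt[3]{\alpha\beta^2}\sum_{r=1}^R\left(\|\hat u^r\|_2\|\hat v^r\|_1\right)^{2/3}.$$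
   Context: For $y\in\mathbb{R}^m$ and $\alpha,\beta>0$, the functional $J^R_{\alpha,\beta}:(\mathbb{R}^{n_1})^R\times(\mathbb{R}^{n_2})^R\to\mathbb{R}$ is $$J^R_{\alpha,\beta}(u^1,\dots,u^R,v^1,\dots,v^R)=\Big\|y-\mathcal{A}\Big(\sum_{r=1}^Ru^r(v^r)^T\Big)\Big\|_2^2+\alpha\sum_{r=1}^R\|u^r\|_2^2+\beta\sum_{r=1}^R\|v^r\|_1.$$ The constant is $C_{2,1}=(1/2)^{2/3}+2^{1/3}$. *)

(* Defs.v *)
From Stdlib Require Import Reals Lra.
Open Scope R_scope.

Fixpoint rsum (n : nat) (f : nat -> R) : R :=
  match n with
  | O => 0
  | S k => rsum k f + f k
  end.

(* Vectors in R^n are functions nat -> R, only indices < n matter. *)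
Definition norm2 (n : nat) (x : nat -> R) : R := sqrt (rsum n (fun i => x i ^ 2)).
Definition norm1 (n : nat) (x : nat -> R) : R := rsum n (fun i => Rabs (x i)).

(* Real power x^p for x >= 0, with the convention 0^p = 0 (p > 0).
   (Stdlib's Rpower 0 p = 1, hence this wrapper.) *)
Definition rpow (x p : R) : R := if Req_EM_T x 0 then 0 else Rpower x p.

(* Linear map A : R^{n1 x n2} -> R^m given by its coefficient tensor a:
   A(X)_i = sum_{j<n1} sum_{k<n2} a i j k * X j k. *)
Definition applyA (n1 n2 : nat) (a : nat -> nat -> nat -> R)
  (X : nat -> nat -> R) : nat -> R :=
  fun i => rsum n1 (fun j => rsum n2 (fun k => a i j k * X j k)).

(* sum_{r<R} u^r (v^r)^T, with u r i = (u^r)_i, v r k = (v^r)_k *)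
Definition lowrank (Rk : nat) (u v : nat -> nat -> R) : nat -> nat -> R :=
  fun j k => rsum Rk (fun r => u r j * v r k).

Definition J (m n1 n2 : nat) (a : nat -> nat -> nat -> R) (y : nat -> R)
  (Rk : nat) (alpha beta : R) (u v : nat -> nat -> R) : R :=
  (norm2 m (fun i => y i - applyA n1 n2 a (lowrank Rk u v) i)) ^ 2
  + alpha * rsum Rk (fun r => (norm2 n1 (u r)) ^ 2)
  + beta * rsum Rk (fun r => norm1 n2 (v r)).

Definition C21 : R := Rpower (1/2) (2/3) + Rpower 2 (1/3).

(* Main.v *)
Require Import Defs.
From Stdlib Require Import Reals Lra Lia.
Open Scope R_scope.

Lemma rsum_ext n f g : (forall i, (i < n)%nat -> f i = g i) -> rsum n f = rsum n g.
Proof. induction n; simpl; intros H; auto. rewrite IHn by (intros; apply H; lia). rewrite (H n) by lia; auto. Qed.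

Lemma rsum_le n f g : (forall i, (i < n)%nat -> f i <= g i) -> rsum n f <= rsum n g.
Proof. induction n; simpl; intros H; [lra|]. assert (H1 := H n ltac:(lia)).
  assert (rsum n f <= rsum n g) by (apply IHn; intros; apply H; lia). lra. Qed.

Lemma rsum_plus n f g : rsum n (fun i => f i + g i) = rsum n f + rsum n g.
Proof. induction n; simpl; [lra|]. rewrite IHn; ring. Qed.

Lemma rsum_scal n c f : rsum n (fun i => c * f i) = c * rsum n f.
Proof. induction n; simpl; [lra|]. rewrite IHn; ring. Qed.

Lemma rsum_nonneg n f : (forall i, (i < n)%nat -> 0 <= f i) -> 0 <= rsum n f.
Proof. intros H. replace 0 with (rsum n (fun _ => 0)). apply rsum_le; auto.
  clear H; induction n; simpl; auto; rewrite IHn; ring. Qed.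

Lemma rsum_term n f i : (forall i, (i < n)%nat -> 0 <= f i) -> (i < n)%nat -> f i <= rsum n f.
Proof. induction n; intros H Hi; [lia|]. simpl.
  assert (0 <= rsum n f) by (apply rsum_nonneg; intros; apply H; lia).
  destruct (Nat.eq_dec i n). subst. lra.
  assert (f i <= rsum n f) by (apply IHn; [intros; apply H|]; lia).
  assert (0 <= f n) by (apply H; lia). lra. Qed.

Lemma norm2_sq n x : norm2 n x ^ 2 = rsum n (fun i => x i ^ 2).
Proof. unfold norm2. apply pow2_sqrt. apply rsum_nonneg. intros; apply pow2_ge_0. Qed.

Lemma norm2_nonneg n x : 0 <= norm2 n x.
Proof. apply sqrt_pos. Qed.

Lemma norm1_nonneg n x : 0 <= norm1 n x.
Proof. apply rsum_nonneg; intros; apply Rabs_pos. Qed.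

Lemma norm2_zero n x : norm2 n x = 0 -> forall i, (i < n)%nat -> x i = 0.
Proof. intros H i Hi. assert (H2 := norm2_sq n x). rewrite H in H2.
  assert (x i ^ 2 <= rsum n (fun i => x i ^ 2)).
  { apply (rsum_term n (fun i => x i ^ 2)); auto; intros; apply pow2_ge_0. }
  assert (0 <= x i ^2) by apply pow2_ge_0. simpl in *. nra. Qed.

Lemma norm1_zero n x : norm1 n x = 0 -> forall i, (i < n)%nat -> x i = 0.
Proof. intros H i Hi. unfold norm1 in H.
  assert (Rabs (x i) <= rsum n (fun i => Rabs (x i))).
  { apply (rsum_term n (fun i => Rabs (x i))); auto; intros; apply Rabs_pos. }
  assert (0 <= Rabs (x i)) by apply Rabs_pos.
  destruct (Req_dec (x i) 0); auto. assert (0 < Rabs (x i)) by (apply Rabs_pos_lt; auto). lra. Qed.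

Lemma norm2_scal n c x : norm2 n (fun j => c * x j) ^ 2 = c ^ 2 * norm2 n x ^ 2.
Proof. rewrite !norm2_sq. rewrite <- rsum_scal. apply rsum_ext; intros; ring. Qed.

Lemma norm1_scal n c x : norm1 n (fun j => c * x j) = Rabs c * norm1 n x.
Proof. unfold norm1. rewrite <- rsum_scal. apply rsum_ext; intros. apply Rabs_mult. Qed.

Ltac pos := repeat first [apply Rmult_lt_0_compat | apply exp_pos | apply pow_lt | apply Rinv_0_lt_compat | assumption | lra].

Lemma key alpha beta a b : 0 < alpha -> 0 < beta -> 0 < a -> 0 < b ->
  let c := exp ((ln beta + ln b - ln 2 - ln alpha - 2 * ln a) / 3) in
  alpha * (c ^ 2 * a ^ 2) + beta * (Rabs (/ c) * b)
  = C21 * Rpower (alpha * beta ^ 2) (1/3) * Rpower (a * b) (2/3).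
Proof. intros Ha Hb HA HB c.
  assert (Hc : 0 < c) by apply exp_pos.
  rewrite Rabs_right by (left; apply Rinv_0_lt_compat; auto).
  unfold C21.
  assert (E1 : alpha * (c ^ 2 * a ^ 2) = Rpower (/2) (2/3) * Rpower (alpha * beta ^ 2) (1/3) * Rpower (a * b) (2/3)).
  { apply ln_inv.
    - apply Rmult_lt_0_compat; auto. apply Rmult_lt_0_compat; apply pow_lt; auto.
    - unfold Rpower. repeat apply Rmult_lt_0_compat; apply exp_pos.
    - assert (0 < beta ^ 2) by (apply pow_lt; auto).
      rewrite ln_mult, ln_mult, ln_pow, ln_pow by pos.
      unfold Rpower. rewrite ln_mult, ln_mult, !ln_exp by pos.
      unfold c. rewrite ln_exp, ln_mult, ln_mult, ln_pow, ln_Rinv by pos.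
      simpl. field. }
  assert (E2 : beta * (/ c * b) = Rpower 2 (1/3) * Rpower (alpha * beta ^ 2) (1/3) * Rpower (a * b) (2/3)).
  { apply ln_inv.
    - apply Rmult_lt_0_compat; auto. apply Rmult_lt_0_compat; auto. apply Rinv_0_lt_compat; auto.
    - unfold Rpower. repeat apply Rmult_lt_0_compat; apply exp_pos.
    - assert (0 < beta ^ 2) by (apply pow_lt; auto).
      rewrite ln_mult, ln_mult, ln_Rinv by pos.
      unfold Rpower. rewrite ln_mult, ln_mult, !ln_exp by pos.
      unfold c. rewrite ln_exp, ln_mult, ln_mult, ln_pow by pos.
      simpl. field. }
  replace (1/2) with (/2) by field. lra. Qed.

Theorem mainTheorem2
  (m n1 n2 : nat) (a : nat -> nat -> nat -> R)
  (Rk : nat) (HR : (1 <= Rk)%nat) (alpha beta : R)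
  (Halpha : 0 < alpha) (Hbeta : 0 < beta)
  (uh vh : nat -> nat -> R) (eta : nat -> R) (y : nat -> R)
  (Hy : forall i, y i = applyA n1 n2 a (lowrank Rk uh vh) i + eta i)
  (u v : nat -> nat -> R)
  (Hmin : forall u' v' : nat -> nat -> R,
      J m n1 n2 a y Rk alpha beta u v <= J m n1 n2 a y Rk alpha beta u' v') :
  (norm2 m (fun i => y i - applyA n1 n2 a (lowrank Rk u v) i)) ^ 2
  <= (norm2 m eta) ^ 2
     + C21 * Rpower (alpha * beta ^ 2) (1/3)
       * rsum Rk (fun r => rpow (norm2 n1 (uh r) * norm1 n2 (vh r)) (2/3)).
Proof.
  set (A r := norm2 n1 (uh r)). set (B r := norm1 n2 (vh r)).
  set (cc r := exp ((ln beta + ln (B r) - ln 2 - ln alpha - 2 * ln (A r)) / 3)).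
  set (cf r := if Req_EM_T (A r * B r) 0 then 0 else cc r).
  set (df r := if Req_EM_T (A r * B r) 0 then 0 else / cc r).
  set (u' r j := cf r * uh r j). set (v' r k := df r * vh r k).
  assert (H1 := Hmin u' v'). unfold J in H1.
  assert (Hsame : forall i, y i - applyA n1 n2 a (lowrank Rk u' v') i = eta i).
  { intro i. rewrite Hy. unfold applyA.
    enough (rsum n1 (fun j => rsum n2 (fun k => a i j k * lowrank Rk u' v' j k)) =
            rsum n1 (fun j => rsum n2 (fun k => a i j k * lowrank Rk uh vh j k))) by lra.
    apply rsum_ext; intros j Hj. apply rsum_ext; intros k Hk. f_equal.
    unfold lowrank. apply rsum_ext; intros r Hr. unfold u', v', cf, df.
    destruct (Req_EM_T (A r * B r) 0) as [E|E].
    - destruct (Rmult_integral _ _ E) as [E'|E'].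
      + rewrite (norm2_zero _ _ E' j Hj). ring.
      + rewrite (norm1_zero _ _ E' k Hk). ring.
    - assert (0 < cc r) by apply exp_pos. field. lra. }
  assert (Hres : norm2 m (fun i => y i - applyA n1 n2 a (lowrank Rk u' v') i) = norm2 m eta).
  { unfold norm2. f_equal. apply rsum_ext; intros; rewrite Hsame; auto. }
  rewrite Hres in H1.
  assert (Hu : 0 <= rsum Rk (fun r => norm2 n1 (u r) ^ 2))
    by (apply rsum_nonneg; intros; apply pow2_ge_0).
  assert (Hv : 0 <= rsum Rk (fun r => norm1 n2 (v r)))
    by (apply rsum_nonneg; intros; apply norm1_nonneg).
  assert (Hcost : alpha * rsum Rk (fun r => norm2 n1 (u' r) ^ 2) + beta * rsum Rk (fun r => norm1 n2 (v' r))
     <= C21 * Rpower (alpha * beta ^ 2) (1/3) * rsum Rk (fun r => rpow (A r * B r) (2/3))).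
  { rewrite <- !rsum_scal, <- rsum_plus. apply rsum_le. intros r Hr.
    unfold u', v'. rewrite norm2_scal, norm1_scal. unfold rpow, cf, df.
    fold (A r). fold (B r).
    destruct (Req_EM_T (A r * B r) 0) as [E|E].
    - rewrite Rabs_R0. right; ring.
    - right. assert (0 <= A r) by apply norm2_nonneg. assert (0 <= B r) by apply norm1_nonneg.
      assert (A r <> 0) by (intro Z; apply E; rewrite Z; ring).
      assert (B r <> 0) by (intro Z; apply E; rewrite Z; ring).
      rewrite <- (key alpha beta (A r) (B r)) by lra. reflexivity. }
  assert (0 < alpha) by auto.
  assert (0 <= alpha * rsum Rk (fun r => norm2 n1 (u r) ^ 2)) by (apply Rmult_le_pos; lra).
  assert (0 <= beta * rsum Rk (fun r => norm1 n2 (v r))) by (apply Rmult_le_pos; lra).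
  unfold A, B in Hcost. lra.
Qed.
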